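(* Let $n\ge 3$ and $s,t\in\{-1,1\}^{n}$ with $s\neq t$ and $\sharp_{n}(s)=\sharp_{n}(t)$. Assume $(s_1,s_2)=(1,-1)$ and $(t_1,t_2)=(-1,1)$. If \[ \sum_{k=1}^{n}s_{k}\sharp_{k}(s)>\sum_{k=1}^{n}t_{k}\sharp_{k}(t),\] then the curve $c_{s,t}$ meets $R=\{(x,y)\in(0,1)^2: x+y>1\}$, i.e. there is $(x,y)\in(0,1)^2$ with $x+y>1$ and \[ \sum_{k=1}^{n}\Big(s_{k}x^{\sharp_{k}(s)}y^{\tilde\sharp_{k}(s)}-t_{k}x^{\sharp_{k}(t)}y^{\tilde\sharp_{k}(t)}\Big)=0 .\]
   Context: For $r\in\{-1,1\}^{n}$ and $1\le k\le n$, $\sharp_{k}(r)$ is the number of entries of $(r_1,\dots,r_k)$ equal to $1$ and $\tilde\sharp_{k}(r)=k-\sharp_{k}(r)$. The curve $c_{s,t}$ is the zero set in $\mathbb{R}^2$ of $\sum_{k=1}^{n}(s_{k}x^{\sharp_{k}(s)}y^{\tilde\sharp_{k}(s)}-t_{k}x^{\sharp_{k}(t)}y^{\tilde\sharp_{k}(t)})$. *)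

(* Defs.v *)
From mathcomp Require Import all_boot all_order all_algebra.
From mathcomp Require Import reals.
Set Implicit Arguments. Unset Strict Implicit. Unset Printing Implicit Defensive.
Import Order.TTheory GRing.Theory Num.Theory.
Local Open Scope ring_scope.

(* Sign vectors r in {-1,1}^n are represented as r : 'I_n -> int, with the
   hypothesis that every entry is -1 or 1.  Index i : 'I_n corresponds to the
   paper's index i+1. *)
Definition pm1 (n : nat) (r : 'I_n -> int) : Prop :=
  forall i, r i = 1 \/ r i = -1.

Definition sharp (n : nat) (r : 'I_n -> int) (k : nat) : nat :=
  #|[set i : 'I_n | (i < k)%N && (r i == 1)]|.

Definition tsharp (n : nat) (r : 'I_n -> int) (k : nat) : nat :=
  (k - sharp r k)%N.

Definition cst (R : ringType) (n : nat) (s t : 'I_n -> int) (x y : R) : R :=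
  \sum_(i < n)
    ((s i)%:~R * x ^+ sharp s i.+1 * y ^+ tsharp s i.+1
     - (t i)%:~R * x ^+ sharp t i.+1 * y ^+ tsharp t i.+1).

(* Main.v *)
Require Import Defs.
From mathcomp Require Import all_boot all_order all_algebra.
From mathcomp Require Import reals.
From mathcomp Require Import polyrcf.
From mathcomp Require Import ring lra.
Set Implicit Arguments. Unset Strict Implicit.
Import Order.TTheory GRing.Theory Num.Theory Num.Def.
Local Open Scope ring_scope.

Lemma cst_horner (R : comNzRingType) n (s t : 'I_n -> int) (p q : {poly R}) u :
  (cst s t p q).[u] = cst s t p.[u] q.[u].
Proof.
rewrite /cst horner_sum; apply: eq_bigr => i _.
by rewrite !hornerE !horner_int.
Qed.

Lemma sharp_le n (r : 'I_n -> int) k : (k <= n)%N -> (sharp r k <= k)%N.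
Proof.
move=> hk; rewrite /sharp.
have -> : [set i : 'I_n | (i < k)%N && (r i == 1)] = 
   [set widen_ord hk j | j in [set j : 'I_k | r (widen_ord hk j) == 1]].
  apply/setP => i; rewrite !inE; apply/idP/imsetP.
    case/andP=> ik ri; exists (Ordinal ik); rewrite ?inE.
      by have -> : widen_ord hk (Ordinal ik) = i by apply: val_inj.
    by apply: val_inj.
  by case=> j; rewrite inE => rj ->; rewrite /= ltn_ord.
apply: leq_trans (leq_imset_card _ _) _; exact: leq_trans (max_card _) (eq_leq (card_ord k)).
Qed.

Lemma sharp_lt n (r : 'I_n -> int) k (j : 'I_n) : (k <= n)%N -> (j < k)%N -> r j != 1 ->
  (sharp r k < k)%N.
Proof.
move=> hk jk rj.
pose r' := fun i => if i == j then 1 else r i.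
have h1 : (sharp r k < sharp r' k)%N.
  rewrite /sharp; apply: proper_card; apply/properP; split.
    apply/subsetP => i; rewrite !inE /r' => /andP[-> ri]; by case: (i == j).
  exists j; rewrite !inE.
    by rewrite /r' eqxx jk.
  by rewrite (negbTE rj) andbF.
by apply: leq_trans h1 (sharp_le _ hk).
Qed.

Lemma sum_pm1 n (r : 'I_n -> int) : pm1 r ->
  \sum_(i < n) r i = 2 * (sharp r n)%:Z - n%:Z.
Proof.
move=> hr.
have -> : \sum_(i < n) r i = \sum_(i < n) (2 * ((r i == 1) : nat)%:Z - 1).
  apply: eq_bigr => i _; case: (hr i) => ->//.
rewrite sumrB -mulr_sumr sumr_const card_ord.
have -> : \sum_(i < n) (((r i == 1) : nat) : int) = (sharp r n)%:Z.
  rewrite -(big_morph Posz PoszD (erefl _)) /sharp -sum1_card big_mkcond /=.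
  congr Posz; rewrite [RHS]big_mkcond; apply: eq_bigr => i _; by rewrite inE ltn_ord.
by congr (_ - _); exact: natz.
Qed.

Lemma intr_sum (R : pzRingType) n (F : 'I_n -> int) :
  (\sum_(i < n) F i)%:~R = \sum_(i < n) (F i)%:~R :> R.
Proof. by apply: big_morph; [exact: intrD | exact: mulr0z]. Qed.

Lemma tsharp0 (R : nzRingType) n (r : 'I_n -> int) k (j : 'I_n) :
  (k <= n)%N -> (j < k)%N -> r j != 1 -> (0 : R) ^+ tsharp r k = 0.
Proof. by move=> hk jk rj; rewrite expr0n /tsharp subn_eq0 leqNgt (sharp_lt hk jk rj). Qed.

Section Poly.
Variable R : rcfType.

Lemma right_sign (p : {poly R}) c : 0 < c -> p != 0 ->
  exists u, [/\ 0 < u, u <= c & sgr p.[u] = sgp_right p 0].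
Proof.
move=> hc pN0; case: (neighpr_wit hc pN0) => u hu.
exists u; split; last exact: sgr_neighpr hu.
  by move: hu; rewrite /neighpr in_itv /= => /andP[].
move: hu; rewrite /neighpr in_itv /= => /andP[_ h].
have := next_root_in p 0 c; rewrite in_itv /= => /andP[_ h2].
apply: ltW; apply: lt_le_trans h _; apply: le_trans h2 _.
by rewrite ge_max lexx ltW.
Qed.

Lemma coef1M (p q : {poly R}) : (p * q)`_1 = p`_0 * q`_1 + p`_1 * q`_0.
Proof. by rewrite coefM !big_ord_recl big_ord0 addr0. Qed.

Lemma coefX01 (p : {poly R}) a : p`_0 = 1 ->
  (p ^+ a)`_0 = 1 /\ (p ^+ a)`_1 = a%:R * p`_1.
Proof.
move=> h0; elim: a => [|a [IH0 IH1]].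
  by rewrite expr0 coefC coefC /= mul0r.
rewrite exprS coef0M coef1M IH0 IH1 h0 mul1r mulr1; split => //.
by rewrite mul1r -[a.+1]addn1 natrD mulrDl mul1r.
Qed.

Lemma coefzM (c : int) (p : {poly R}) k : (c%:~R * p)`_k = c%:~R * p`_k.
Proof. by rewrite mulrzl coefMrz mulrzl. Qed.

Definition Mon (a b : nat) : {poly R} := (1 - 'X) ^+ a * (1 - 'X ^+ 2) ^+ b.

Lemma Mon01 a b : (Mon a b)`_0 = 1 /\ (Mon a b)`_1 = - a%:R.
Proof.
have hX0 : (1 - 'X : {poly R})`_0 = 1 by rewrite coefB coefC coefX subr0.
have hX1 : (1 - 'X : {poly R})`_1 = -1 by rewrite coefB coefC coefX sub0r.
have hY0 : (1 - 'X^2 : {poly R})`_0 = 1 by rewrite coefB coefC coefXn subr0.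
have hY1 : (1 - 'X^2 : {poly R})`_1 = 0 by rewrite coefB coefC coefXn subr0.
have [A0 A1] := coefX01 a hX0; have [B0 B1] := coefX01 b hY0.
rewrite /Mon coef0M coef1M A0 A1 B0 B1 hX1 hY1; split; first by rewrite mulr1.
by rewrite !mulr0 add0r mulr1 mulrN1.
Qed.

Lemma conv_lt (a p q v : R) : 0 <= v -> v <= 1 -> a < p -> a < q -> a < p + (q - p) * v.
Proof. move=> h0 h1 hp hq; have [hv|hv] := ltP v 1; first nra. have -> : v = 1 by lra. lra. Qed.

Lemma conv_gt (a p q v : R) : 0 <= v -> v <= 1 -> p < a -> q < a -> p + (q - p) * v < a.
Proof. move=> h0 h1 hp hq; have [hv|hv] := ltP v 1; first nra. have -> : v = 1 by lra. lra. Qed.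

End Poly.


Unset Implicit Arguments.
Theorem proposition3p1 (R : realType) (n : nat) (hn : (3 <= n)%N)
  (s t : 'I_n -> int) (hs : pm1 s) (ht : pm1 t) (hst : s <> t)
  (hsharp : sharp s n = sharp t n)
  (i0 i1 : 'I_n) (hi0 : nat_of_ord i0 = 0%N) (hi1 : nat_of_ord i1 = 1%N)
  (hs12 : s i0 = 1 /\ s i1 = -1) (ht12 : t i0 = -1 /\ t i1 = 1)
  (hineq : \sum_(i < n) s i * (sharp s i.+1)%:Z
           > \sum_(i < n) t i * (sharp t i.+1)%:Z) :
  exists x y : R, [/\ 0 < x < 1, 0 < y < 1, 1 < x + y & cst s t x y = 0].
Proof.
case: hs12 => s0 s1; case: ht12 => t0 t1.
set D := \sum_(i < n) s i * (sharp s i.+1)%:Z - \sum_(i < n) t i * (sharp t i.+1)%:Z.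
have hD : 0 < D by rewrite subr_gt0.
pose Q := cst s t (1 - 'X) (1 - 'X^2) : {poly R}.
have Q0 : Q.[0] = 0.
  rewrite cst_horner !hornerE !expr0n /= !subr0 /cst.
  under eq_bigr do rewrite !expr1n !mulr1.
  rewrite sumrB -!(big_morph _ (@intrD R) (mulr0z 1)) sum_pm1 // sum_pm1 //.
  by rewrite hsharp subrr.
have Q1 : Q`_1 = - D%:~R.
  rewrite /Q /cst coef_sum /D intrB !intr_sum opprB -sumrB.
  apply: eq_bigr => i _.
  rewrite -!mulrA coefB !coefzM.
  have [_ ->] := Mon01 R (sharp s i.+1) (tsharp s i.+1).
  have [_ ->] := Mon01 R (sharp t i.+1) (tsharp t i.+1).
  rewrite !intrM; ring.
have DR : 0 < (D%:~R : R) by rewrite ltr0z.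
have QN0 : Q != 0.
  apply/eqP => hQ; move: Q1; rewrite hQ coef0 => /eqP; rewrite eq_sym oppr_eq0 => /eqP h.
  by move: DR; rewrite h ltxx.
have sQ : sgp_right Q 0 = -1.
  rewrite sgp_right_deriv; last by rewrite rootE Q0.
  have hd : Q^`().[0] = - D%:~R by rewrite horner_coef0 coef_deriv Q1.
  rewrite sgp_rightNroot; last by rewrite rootE hd oppr_eq0 gt_eqF.
  by rewrite hd ltr0_sg // oppr_lt0.
have c3 : (0 : R) < 3^-1 by rewrite invr_gt0.
have [u1 [u1p u1c sQu]] := right_sign c3 QN0.
have Qu1 : cst s t (1 - u1) (1 - u1^+2) < 0.
  have : sgr Q.[u1] == -1 by rewrite sQu sQ.
  by rewrite sgr_cp0 /Q cst_horner !hornerE.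
have C10 : cst s t (1 : R) 0 = 1.
  have n1 : (1 <= n)%N by apply: leq_trans hn.
  have i0n : i0 != i1 by apply/eqP => h; move: hi0; rewrite h hi1.
  rewrite /cst (bigD1 i0) //= big1 ?addr0.
    have e1 : sharp s 1 = 1%N.
      apply/anti_leq; rewrite sharp_le //=; apply/card_gt0P; exists i0.
      by rewrite inE hi0 s0 eqxx.
    rewrite hi0 !expr1n !mulr1 (@tsharp0 _ _ t 1 i0) ?hi0 ?t0 //.
    by rewrite /tsharp e1 subnn expr0 mulr1 s0 mulr0 subr0.
  move=> i hi.
  have i1i : (i1 < i.+1)%N.
    by rewrite hi1 ltnS lt0n; apply: contraNneq hi => h; apply/eqP/val_inj; rewrite /= h hi0.
  rewrite (@tsharp0 _ _ t i.+1 i0) ?hi0 ?t0 // (@tsharp0 _ _ s i.+1 i1) ?s1 //.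
  by rewrite !mulr0 subrr.
pose P := cst s t (1 - 'X) ('X *+ 2) : {poly R}.
have P0 : P.[0] = 1 by rewrite /P cst_horner !hornerE subr0 C10.
have PN0 : P != 0 by apply/eqP => hP; move: P0; rewrite hP horner0 => /eqP; rewrite eq_sym oner_eq0.
have sP : sgp_right P 0 = 1 by rewrite sgp_rightNroot ?rootE P0 ?oner_eq0 // sgr1.
have [u2 [u2p u2c sPu]] := right_sign c3 PN0.
have Pu2 : 0 < cst s t (1 - u2) (u2 *+ 2).
  have : sgr P.[u2] == 1 by rewrite sPu sP.
  by rewrite sgr_cp0 /P cst_horner !hornerE.
set x1 := 1 - u2; set y1 := u2 *+ 2; set x2 := 1 - u1; set y2 := 1 - u1 ^+ 2.
pose H := cst s t (x1%:P + (x2 - x1) *: 'X) (y1%:P + (y2 - y1) *: 'X) : {poly R}.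
have ev : forall a b w : R, (a%:P + (b - a) *: 'X).[w] = a + (b - a) * w.
  by move=> a b w; rewrite hornerD hornerC hornerZ hornerX.
have H0 : H.[0] = cst s t x1 y1 by rewrite /H cst_horner !ev !mulr0 !addr0.
have H1 : H.[1] = cst s t x2 y2.
  by rewrite /H cst_horner !ev !mulr1 ![x1 + _]addrC ![y1 + _]addrC !subrK.
have HH : H.[0] * H.[1] < 0 by rewrite H0 H1; nra.
have [v vI rv] := poly_ivtoo ler01 HH.
move: vI; rewrite in_itv /= => /andP[v0 v1].
move: rv; rewrite rootE /H cst_horner !ev => /eqP rv.
exists (x1 + (x2 - x1) * v), (y1 + (y2 - y1) * v).
have u13 : u1 * 3 <= 1 by lra.
have u23 : u2 * 3 <= 1 by lra.
have hx1 : 0 < x1 < 1 by rewrite /x1; apply/andP; split; lra.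
have hx2 : 0 < x2 < 1 by rewrite /x2; apply/andP; split; lra.
have hy1 : 0 < y1 < 1 by rewrite /y1; apply/andP; split; lra.
have hy2 : 0 < y2 < 1 by rewrite /y2; apply/andP; split; nra.
have hs1 : 1 < x1 + y1 by rewrite /x1 /y1; lra.
have hs2 : 1 < x2 + y2 by rewrite /x2 /y2; nra.
case/andP: hx1 => ? ?; case/andP: hx2 => ? ?; case/andP: hy1 => ? ?; case/andP: hy2 => ? ?.
split => //; try (apply/andP; split).
- by apply: conv_lt; rewrite ?ltW.
- by apply: conv_gt; rewrite ?ltW.
- by apply: conv_lt; rewrite ?ltW.
- by apply: conv_gt; rewrite ?ltW.
- have -> : x1 + (x2 - x1) * v + (y1 + (y2 - y1) * v) = (x1 + y1) + ((x2 + y2) - (x1 + y1)) * v by ring.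
  by apply: conv_lt; rewrite ?ltW.
Qed.
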